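(* Let $m\ge3$ and let $\mathscr{P}$ be a symmetric transition probability tensor of order $m$ and dimension $2$. Then $\mathscr{P}$ has a unique positive stationary probability vector (i.e., one with both entries strictly positive), and it equals $(\tfrac12,\tfrac12)^\top$.
   Context: $\mathscr{P}=(p_{i_1\cdots i_m})$ is a tensor of order $m$ and dimension $2$ with real entries indexed by $i_1,\dots,i_m\in\{1,2\}$. It is symmetric if its entries are invariant under every permutation of indices. It is a transition probability tensor if $0\le p_{i_1\cdots i_m}\le1$ and $\sum_{i_1=1}^2p_{i_1i_2\cdots i_m}=1$ for all $i_2,\dots,i_m$. A stationary probability vector of $\mathscr{P}$ is a vector $z=(z_1,z_2)^\top$ with $z_1,z_2\ge0$ and $z_1+z_2=1$ such that $$\sum_{i_2,\dots,i_m=1}^2p_{ii_2\cdots i_m}z_{i_2}\cdots z_{i_m}=z_i\quad\text{for } i=1,2.$$ *)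

(* Defs.v *)
From HB Require Import structures.
From mathcomp Require Import all_boot all_order all_algebra all_fingroup.
Set Implicit Arguments. Unset Strict Implicit. Unset Printing Implicit Defensive.
Import Order.TTheory GRing.Theory Num.Theory.
Local Open Scope ring_scope.

(* A tensor of order m and dimension 2: entries indexed by (i_1,...,i_m),
   encoded as functions f : 'I_m -> 'I_2 (position k holds index i_{k+1};
   values 0,1 of 'I_2 stand for indices 1,2). *)
Definition tensor2 (R : Type) (m : nat) := {ffun 'I_m -> 'I_2} -> R.

Definition symmetric_tensor (R : Type) (m : nat) (P : tensor2 R m) : Prop :=
  forall (s : 'S_m) (f : {ffun 'I_m -> 'I_2}), P [ffun k => f (s k)] = P f.

Definition same_tail (m : nat) (f g : {ffun 'I_m -> 'I_2}) : bool :=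
  [forall k : 'I_m, (val k != 0%N) ==> (g k == f k)].

Definition transition_prob_tensor (R : numDomainType) (m : nat) (P : tensor2 R m) : Prop :=
  (forall f, 0 <= P f <= 1) /\
  (forall f, \sum_(g | same_tail f g) P g = 1).

Definition stationary_prob_vector (R : numDomainType) (m : nat) (P : tensor2 R m)
    (z : 'I_2 -> R) : Prop :=
  (forall i, 0 <= z i) /\ (\sum_(i < 2) z i = 1) /\
  (forall i : 'I_2,
     \sum_(f : {ffun 'I_m -> 'I_2} | [forall k : 'I_m, (val k == 0%N) ==> (f k == i)])
        P f * \prod_(k : 'I_m | val k != 0%N) z (f k) = z i).

Definition positive_stationary_prob_vector (R : numDomainType) (m : nat)
    (P : tensor2 R m) (z : 'I_2 -> R) : Prop :=
  stationary_prob_vector P z /\ (forall i, 0 < z i).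

(* Main.v *)
Require Import Defs.
From HB Require Import structures.
From mathcomp Require Import all_boot all_order all_algebra all_fingroup.
From mathcomp Require Import ring lra.
Set Implicit Arguments. Unset Strict Implicit. Unset Printing Implicit Defensive.
Import Order.TTheory GRing.Theory Num.Theory.
Local Open Scope ring_scope.

Definition one2 : 'I_2 := Ordinal (isT : (1 < 2)%N).
Definition tog (b : 'I_2) : 'I_2 := if val b == 0%N then one2 else ord0.
Definition flip n (f : {ffun 'I_n -> 'I_2}) (k : 'I_n) : {ffun 'I_n -> 'I_2} :=
  [ffun j => if j == k then tog (f j) else f j].
Definition sgn (R : ringType) (b : 'I_2) : R := if val b == 0%N then 1 else -1.

Lemma I2_cases (a b : 'I_2) : b = a \/ b = tog a.
Proof.
case: a => [[|[|//]]] ? ; case: b => [[|[|//]]] ?; rewrite /tog /=;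
  try (left; exact: val_inj); right; exact: val_inj.
Qed.

Lemma tog_neq (a : 'I_2) : tog a != a.
Proof. by case: a => [[|[|//]]] ?. Qed.

Lemma sgn_tog (R : ringType) (a : 'I_2) : sgn R (tog a) = - sgn R a.
Proof. by case: a => [[|[|//]]] ?; rewrite /sgn /tog /= ?opprK. Qed.

Lemma half2 (R : realFieldType) : (2^-1 : R) + 2^-1 = 1.
Proof. lra. Qed.

Section Main.
Variables (R : realFieldType) (n : nat) (P : tensor2 R n.+1).
Hypothesis hs : symmetric_tensor P.
Hypothesis ht : transition_prob_tensor P.

Lemma flip0 (h : {ffun 'I_n.+1 -> 'I_2}) : P h + P (flip h ord0) = 1.
Proof.
case: ht => _ /(_ h) <-.
have sth : same_tail h h by apply/forallP => k; apply/implyP.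
have stf : same_tail h (flip h ord0).
  apply/forallP => k; apply/implyP => hk; rewrite ffunE.
  by have -> : (k == ord0) = false by apply/negbTE; rewrite -val_eqE.
have neq : flip h ord0 != h.
  apply/eqP => /ffunP /(_ ord0); rewrite ffunE eqxx => /eqP; apply/negP/tog_neq.
rewrite (bigD1 h) //= (bigD1 (flip h ord0)) /=; last by rewrite stf neq.
rewrite big1 ?addr0 // => g /andP [/andP [sg gh] gf].
exfalso.
have hg : forall k, k != ord0 -> g k = h k.
  move=> k hk; move/forallP: sg => /(_ k) /implyP; rewrite -val_eqE in hk.
  by move=> /(_ hk) /eqP.
case: (I2_cases (h ord0) (g ord0)) => e.
  move/negP: gh; apply; apply/eqP/ffunP => k.
  by case: (eqVneq k ord0) => [->|/hg].
move/negP: gf; apply; apply/eqP/ffunP => k; rewrite ffunE.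
by case: (eqVneq k ord0) => [->|/hg].
Qed.

Lemma flip_sum (f : {ffun 'I_n.+1 -> 'I_2}) k : P f + P (flip f k) = 1.
Proof.
set s := tperm ord0 k.
have e1 : P [ffun j => f (s j)] = P f by apply: hs.
have e2 : P [ffun j => flip f k (s j)] = P (flip f k) by apply: hs.
rewrite -e1 -e2.
have -> : [ffun j => flip f k (s j)] = flip [ffun j => f (s j)] ord0.
  apply/ffunP => j; rewrite !ffunE.
  have -> : (s j == k) = (j == ord0).
    by rewrite /s -[X in _ == X](tpermL ord0 k) (inj_eq (@perm_inj _ _)).
  by [].
exact: flip0.
Qed.

Definition cst := P [ffun => ord0] - 2^-1.

Lemma sign_lemma (f : {ffun 'I_n.+1 -> 'I_2}) :
  P f - 2^-1 = cst * \prod_k sgn R (f k).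
Proof.
move: {2}(\sum_k val (f k))%N (leqnn (\sum_k val (f k))%N) => w.
elim: w f => [|w IH] f hw.
  have -> : f = [ffun => ord0].
    apply/ffunP => k; rewrite ffunE; apply: val_inj => /=.
    move: hw; rewrite leqn0 => /eqP; rewrite (bigD1 k) //=.
    by move/eqP; rewrite addn_eq0 => /andP [/eqP ->].
  by rewrite /cst big1 ?mulr1 // => k _; rewrite ffunE.
case: (boolP [exists k, val (f k) != 0%N]) => [/existsP [k hk]|hno].
  have hfk : f k = one2.
    by case: (I2_cases ord0 (f k)) => // e; rewrite e in hk.
  have ew : (\sum_k0 val (flip f k k0) + 1 = \sum_k0 val (f k0))%N.
    rewrite (bigD1 k) //= [X in (_ = X)%N](bigD1 k) //= ffunE eqxx hfk /=.
    rewrite add0n addnC; congr (_ + _)%N; apply: eq_bigr => j hj.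
    by rewrite ffunE (negbTE hj).
  have hw' : (\sum_k0 val (flip f k k0) <= w)%N.
    by rewrite -ltnS -addn1 ew.
  have := IH _ hw'.
  have hp : \prod_k0 sgn R (flip f k k0) = - \prod_k0 sgn R (f k0).
    rewrite (bigD1 k) //= [X in (_ = - X)](bigD1 k) //= ffunE eqxx sgn_tog.
    rewrite mulNr; congr (- (_ * _)); apply: eq_bigr => j hj.
    by rewrite ffunE (negbTE hj).
  rewrite hp => h2.
  have := flip_sum f k.
  move=> h3.
  have -> : P f - 2^-1 = - (P (flip f k) - 2^-1).
    have -> : P f = 1 - P (flip f k) by rewrite -h3 addrK.
    have h2' : (2^-1 : R) + 2^-1 = 1.
      lra.
    by rewrite -{1}h2'; ring.
  by rewrite h2 mulrN opprK.
have -> : f = [ffun => ord0].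
  apply/ffunP => k; rewrite ffunE; apply: val_inj => /=.
  apply/eqP; apply: contraNT hno => hk; apply/existsP; exists k; exact: hk.
by rewrite /cst big1 ?mulr1 // => k _; rewrite ffunE.
Qed.

Lemma sum_prod (i : 'I_2) (F : 'I_n.+1 -> 'I_2 -> R) :
  \sum_(f : {ffun 'I_n.+1 -> 'I_2} | [forall k : 'I_n.+1, (val k == 0%N) ==> (f k == i)])
     \prod_(k : 'I_n.+1 | val k != 0%N) F k (f k)
  = \prod_(k : 'I_n.+1 | val k != 0%N) (F k ord0 + F k one2).
Proof.
have -> : \prod_(k : 'I_n.+1 | val k != 0%N) (F k ord0 + F k one2)
   = \prod_(k : 'I_n.+1 | val k != 0%N) \sum_(j : 'I_2 | predT j) F k j.
  apply: eq_bigr => k _; rewrite big_ord_recl big_ord_recl big_ord0 addr0.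
  by congr (_ + _); congr (F k _); apply: val_inj.
rewrite (big_distr_big_dep i); apply: eq_bigl => f.
apply/idP/idP.
  move/forallP => h; apply/pfamilyP; split.
    apply/subsetP => k; rewrite !inE; apply: contraR => hk.
    by move: (h k) => /implyP; apply; move: hk; rewrite negbK.
  by [].
case/pfamilyP => /subsetP hsub _; apply/forallP => k; apply/implyP => hk.
apply: contraLR hk => hk.
have := hsub k; rewrite !inE; exact.
Qed.

Lemma stat_sum (z : 'I_2 -> R) (i : 'I_2) :
  \sum_(f : {ffun 'I_n.+1 -> 'I_2} | [forall k : 'I_n.+1, (val k == 0%N) ==> (f k == i)])
        P f * \prod_(k : 'I_n.+1 | val k != 0%N) z (f k)
  = 2^-1 * \prod_(k : 'I_n.+1 | val k != 0%N) (z ord0 + z one2)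
    + cst * sgn R i * \prod_(k : 'I_n.+1 | val k != 0%N) (z ord0 - z one2).
Proof.
have e : forall f : {ffun 'I_n.+1 -> 'I_2},
   [forall k : 'I_n.+1, (val k == 0%N) ==> (f k == i)] ->
   P f * \prod_(k : 'I_n.+1 | val k != 0%N) z (f k) =
   2^-1 * \prod_(k : 'I_n.+1 | val k != 0%N) z (f k) +
   cst * sgn R i * \prod_(k : 'I_n.+1 | val k != 0%N) (sgn R (f k) * z (f k)).
  move=> f /forallP hf.
  have hf0 : f ord0 = i by apply/eqP; move: (hf ord0) => /implyP; apply.
  have hP : P f = 2^-1 + cst * \prod_k sgn R (f k).
    by rewrite -sign_lemma addrC subrK.
  rewrite hP (bigD1 ord0) //= hf0 big_split /=.
  have -> : \prod_(k < n.+1 | k != ord0) sgn R (f k)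
      = \prod_(k < n.+1 | val k != 0%N) sgn R (f k) by [].
  ring.
rewrite (eq_bigr _ e) big_split /= -!mulr_sumr.
rewrite (sum_prod i (fun k j => z j)).
rewrite (sum_prod i (fun k j => sgn R j * z j)).
congr (_ + _); congr (_ * _); apply: eq_bigr => k _.
by rewrite /sgn /= mul1r mulN1r.
Qed.

End Main.

Theorem corollary2p1 (R : realFieldType) (m : nat) (P : tensor2 R m) :
  (3 <= m)%N ->
  symmetric_tensor P ->
  transition_prob_tensor P ->
  positive_stationary_prob_vector P (fun _ => 2^-1) /\
  (forall z : 'I_2 -> R, positive_stationary_prob_vector P z ->
     forall i, z i = 2^-1).
Proof.
case: m P => [|n] P // hm hs ht.
have card : #|[pred k : 'I_n.+1 | val k != 0%N]| = n.
  have -> : #|[pred k : 'I_n.+1 | val k != 0%N]| = #|predC1 (ord0 : 'I_n.+1)| by [].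
  by rewrite cardC1 card_ord.
have pc : forall x : R, \prod_(k : 'I_n.+1 | val k != 0%N) x = x ^+ n.
  move=> x; rewrite -[RHS](congr1 (fun t => x ^+ t) card) -prodr_const; apply: eq_bigl => k; by rewrite inE.
have h2 : (2^-1 : R) + 2^-1 = 1.
  lra.
have h2p : (0 : R) < 2^-1 by rewrite invr_gt0 ltr0n.
have sum2 : forall z : 'I_2 -> R, \sum_(i < 2) z i = z ord0 + z one2.
  move=> z; rewrite big_ord_recl big_ord_recl big_ord0 addr0.
  by congr (_ + _); congr (z _); apply: val_inj.
split.
  split; last by [].
  split; first by move=> i; apply: ltW.
  split; first by rewrite sum2.
  move=> i; rewrite (stat_sum hs ht (fun _ => 2^-1)) !pc h2 subrr expr0n /=.
  have -> : (n == 0%N) = false by case: (n) hm.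
  by rewrite mulr0 addr0 expr1n mulr1.
move=> z [[z0 [zs zst]] zp] i.
rewrite sum2 in zs.
have := zst ord0; rewrite (stat_sum hs ht z) !pc zs expr1n mulr1 /sgn /= mulr1.
set d := z ord0 - z one2.
set c := cst P.
move=> eq.
have hc : `|2 * c| <= 1.
  case: ht => /(_ [ffun => ord0]) /andP [a0 a1] _.
  rewrite /c /cst ler_norml; apply/andP; split; lra.
have hd : `|d| < 1.
  have p0 := zp ord0; have p1 := zp one2.
  rewrite /d ltr_norml; apply/andP; split; lra.
have dd : d = 2 * c * d ^+ n.
  have ex : z ord0 = 2^-1 * (1 + d) by rewrite /d; lra.
  rewrite ex in eq.
  rewrite -mulrA; move: eq; set t := c * d ^+ n; lra.
have d0 : d = 0.
  apply/eqP; apply/negPn/negP => dn0.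
  have n2 : (1 < n)%N by [].
  have e : d ^+ n = d * d ^+ n.-1 by rewrite -exprS (ltn_predK n2).
  have : 1 = 2 * c * d ^+ n.-1.
    apply: (mulfI dn0); rewrite mulr1 {1}dd e; ring.
  move=> e1.
  have : `|2 * c * d ^+ n.-1| < 1.
    rewrite normrM normrX.
    have hlt : `|d| ^+ n.-1 < 1.
      by rewrite exprn_ilt1 // -lt0n -ltnS (ltn_predK n2).
    apply: (le_lt_trans (y := `|d| ^+ n.-1)) => //.
    rewrite -[X in _ <= X]mul1r ler_wpM2r //; exact: exprn_ge0.
  by rewrite -e1 normr1 ltxx.
have x0 : z ord0 = z one2 by apply/eqP; rewrite -subr_eq0 -/d d0.
have hx : z ord0 = 2^-1.
  lra.
case: (I2_cases ord0 i) => ->; first exact: hx.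
by rewrite /tog /= -x0.
Qed.
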